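(* Let $F$ be a Ferrers diagram of semiperimeter $n+1$, let $G=G(F)$, and let $c'\in\mathsf{Rec}(G)$ with canonical toppling $\mathsf{CanonTop}(c')=(U^{(0)}_{c'},V^{(1)}_{c'},U^{(1)}_{c'},V^{(2)}_{c'},\ldots)$. Define the configuration $c=(c_1,\ldots,c_n)$ by \[ c_j=\begin{cases}\big|\{\ell\in V^{(k)}_{c'} : j<\ell,\ k>i\}\big| & \text{if } j\in U^{(i)}_{c'},\\[2pt] \big|\{\ell\in U^{(k)}_{c'} : j>\ell,\ k\ge i\}\big| & \text{if } j\in V^{(i)}_{c'}.\end{cases} \] Then $c\in\mathsf{Rec}^{\mathsf{min}}(G)$ and $\mathsf{CanonTop}(c)=\mathsf{CanonTop}(c')$. (This $c$ is denoted $\mathsf{minrec}(c')$.) Moreover, if $c'\in\mathsf{Rec}^{\mathsf{min}}(G)$, then $\mathsf{minrec}(c')=c'$.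
   Context: Ferrers diagrams and graphs: a Ferrers diagram $F$ (English convention, left-justified rows of weakly decreasing lengths from top to bottom) of semiperimeter $n+1$ has its rows and columns labeled by $0,1,\ldots,n$ as follows: traverse the south-east boundary path of $F$ from its top-right corner to its bottom-left corner; its $n+1$ unit steps are labeled $0,1,\ldots,n$ in order; a vertical step gives its label to the row it bounds, a horizontal step gives its label to the column it bounds (so the top row is labeled $0$). Let $\mathsf{rows}(F)$, $\mathsf{cols}(F)$ be the sets of row and column labels; they partition $\{0,\ldots,n\}$, and for $i\in\mathsf{rows}(F)$, $j\in\mathsf{cols}(F)$, $F$ has a cell in row $i$ and column $j$ iff $i<j$. The Ferrers graph $G(F)$ has vertex set $\{0,\ldots,n\}$ and an edge between $i\in\mathsf{rows}(F)$ and $j\in\mathsf{cols}(F)$ iff $i<j$. Sandpile model: vertex $0$ is the sink. A configuration is $c=(c_1,\ldots,c_n)\in\mathbb{N}^n$ ($c_v$ grains on vertex $v$). A non-sink vertex $v$ is unstable if $c_v\ge\deg(v)$; toppling $v$ decreases $c_v$ by $\deg(v)$ and increases $c_w$ by $1$ for each non-sink neighbour $w$; toppling the sink adds one grain to each of its neighbours. A configuration is stable if every non-sink vertex is stable; a stable configuration is recurrent if it can be obtained from the configuration with $c_v=\deg(v)-1$ for all $v$ by adding grains and toppling unstable vertices until stable. $\mathsf{Rec}(G)$ is the set of recurrent configurations; $\mathsf{Rec}^{\mathsf{min}}(G)$ is the set of recurrent configurations whose total number of grains $\sum_v c_v$ is minimal among all recurrent configurations. Canonical toppling: for $c\in\mathsf{Rec}(G(F))$,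 starting from $c$, topple the sink ($U^{(0)}_c=\{0\}$), then alternately topple simultaneously all unstable vertices lying in $\mathsf{cols}(F)$ (this set is $V^{(1)}_c$), then all unstable vertices in $\mathsf{rows}(F)$ ($U^{(1)}_c$), then all unstable vertices in $\mathsf{cols}(F)$ ($V^{(2)}_c$), etc. For recurrent $c$ each vertex topples exactly once, and $\mathsf{CanonTop}(c)=(U^{(0)}_c,V^{(1)}_c,U^{(1)}_c,V^{(2)}_c,\ldots)$ is an ordered set partition of $\{0,\ldots,n\}$ (trailing empty sets omitted). *)

(* Defs.v *)
From mathcomp Require Import all_boot.
Set Implicit Arguments.
Unset Strict Implicit.
Unset Printing Implicit Defensive.

(* Configurations are finite functions V -> nat whose value at the      *)
(* sink is always 0 (the sink carries no grains); only the non-sink     *)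
(* values c_v are meaningful.                                           *)
Section Sandpile.
Variables (V : finType) (e : rel V) (s : V).

Definition config := {ffun V -> nat}.

Definition deg (v : V) : nat := #|[set w | e v w]|.

Definition stable (c : config) : bool :=
  [forall v, (v != s) ==> (c v < deg v)].

(* simultaneous toppling of all vertices of S (each once);
   toppling the sink just sends one grain to each neighbour *)
Definition topple_set (S : {set V}) (c : config) : config :=
  [ffun w => if w == s then 0
             else c w - (if w \in S then deg w else 0) + #|[set u in S | e u w]|].

Definition topple (v : V) (c : config) : config := topple_set [set v] c.

Definition add_grain (v : V) (c : config) : config :=
  [ffun w => c w + (w == v)].

Definition cmax : config := [ffun v => if v == s then 0 else (deg v).-1].

Inductive sp_step : config -> config -> Prop :=
| StepAdd (c : config) v : v != s -> sp_step c (add_grain v c)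
| StepTopple (c : config) v : v != s -> deg v <= c v -> sp_step c (topple v c).

Inductive reachable : config -> Prop :=
| reach_max : reachable cmax
| reach_step (c d : config) : reachable c -> sp_step c d -> reachable d.

Definition recurrent (c : config) : Prop := stable c /\ reachable c.

Definition total (c : config) : nat := \sum_(v | v != s) c v.

Definition recmin (c : config) : Prop :=
  recurrent c /\ forall d, recurrent d -> total c <= total d.

(* Canonical toppling for a bipartition rows / cols (cols = ~~ row). *)
Variable row : pred V.

(* step t >= 1 : odd t topples unstable column vertices (V^(k)),
   even t topples unstable row vertices (U^(k)) *)
Definition side (t : nat) (v : V) : bool := if odd t then ~~ row v else row v.

Definition unstable_in (t : nat) (c : config) : {set V} :=
  [set v | (v != s) && side t v && (deg v <= c v)].

Fixpoint canon_state (c : config) (t : nat) : config * {set V} :=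
  match t with
  | 0 => (topple_set [set s] c, [set s])
  | t'.+1 => let d := (canon_state c t').1 in
             let S := unstable_in t d in (topple_set S d, S)
  end.

(* CanonTop c as an infinite sequence of sets
   (U^(0), V^(1), U^(1), V^(2), ...), padded with empty sets *)
Definition CanonTop (c : config) (t : nat) : {set V} := (canon_state c t).2.

Definition Ulev (c : config) (i : nat) : {set V} := CanonTop c i.*2.
Definition Vlev (c : config) (i : nat) : {set V} :=
  if i is 0 then set0 else CanonTop c (i.*2).-1.

End Sandpile.

(* Ferrers diagrams of semiperimeter n+1, encoded by their south-east   *)
(* boundary path read from the top-right to the bottom-left corner:     *)
(* F`_k = true iff the k-th unit step (label k) is vertical (a row).    *)
(* A word is such a boundary path iff it has length n+1, starts with a  *)
(* vertical step and ends with a horizontal step.                       *)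
Definition ferrers (n : nat) (F : seq bool) : Prop :=
  [/\ size F = n.+1, nth false F 0 = true & nth true F n = false].

Definition isrow (n : nat) (F : seq bool) (i : 'I_n.+1) : bool := nth false F i.

Definition fcell (n : nat) (F : seq bool) (i j : 'I_n.+1) : bool :=
  [&& isrow F i, ~~ isrow F j & i < j].

(* the Ferrers graph G(F), vertex set {0..n} = 'I_n.+1, sink 0 *)
Definition fedge (n : nat) (F : seq bool) : rel 'I_n.+1 :=
  fun i j => fcell F i j || fcell F j i.

(* minrec(c'); levels range over 'I_n.+2, which covers all nonempty
   sets of CanonTop c' for recurrent c' *)
Definition minrec (n : nat) (F : seq bool) (c' : config 'I_n.+1) : config 'I_n.+1 :=
  let U := Ulev (fedge F) ord0 (isrow F) c' in
  let W := Vlev (fedge F) ord0 (isrow F) c' in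
  [ffun j : 'I_n.+1 =>
     if j == ord0 then 0
     else if isrow F j then
       if [pick i : 'I_n.+2 | j \in U i] is Some i then
         #|[set l : 'I_n.+1 | [exists k : 'I_n.+2, (i < k) && (l \in W k)] && (j < l)]|
       else 0
     else
       if [pick i : 'I_n.+2 | j \in W i] is Some i then
         #|[set l : 'I_n.+1 | [exists k : 'I_n.+2, (i <= k) && (l \in U k)] && (l < j)]|
       else 0].

(* Main.v *)
Require Import Defs.
From mathcomp Require Import all_boot zify.
Set Implicit Arguments. Unset Strict Implicit. Unset Printing Implicit Defensive.

Lemma card_sum (T : finType) (P : pred T) : #|[set x | P x]| = \sum_x (P x : nat).
Proof. rewrite -sum1dep_card big_mkcond /=; apply: eq_bigr => x _; by case: (P x). Qed.

Section Gen.
Variables (V : finType) (e : rel V) (s : V) (row : pred V).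
Hypothesis esymm : forall x y, e x y = e y x.
Hypothesis eirr : forall x, e x x = false.
Hypothesis ebip : forall u w, e u w -> row u != row w.
Hypothesis rows : row s.

Definition nb (X : {set V}) v := \sum_(u in X) (e u v : nat).

Lemma deg_nb v : deg e v = nb setT v.
Proof.
rewrite /deg card_sum /nb; apply: eq_big => [u|u _]; [by rewrite inE | by rewrite esymm].
Qed.

Lemma nb_split (X : {set V}) v : deg e v = nb X v + nb (~: X) v.
Proof.
rewrite deg_nb /nb (bigID (fun u => u \in X)) /=.
congr (_ + _); apply: eq_bigl => u; by rewrite !inE.
Qed.

Lemma nb_le (X : {set V}) v : nb X v <= deg e v.
Proof. by rewrite (nb_split X v) leq_addr. Qed.

Lemma nbU (X Y : {set V}) v : [disjoint X & Y] -> nb (X :|: Y) v = nb X v + nb Y v.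
Proof.
move=> H; rewrite /nb -bigU //; apply: eq_bigl => u; by rewrite !inE.
Qed.

Lemma nb0 (v : V) : nb set0 v = 0.
Proof. by rewrite /nb big_set0. Qed.

Lemma nb1 (u v : V) : nb [set u] v = e u v.
Proof. by rewrite /nb big_set1. Qed.

Lemma nb_sub (X Y : {set V}) v : X \subset Y -> nb X v <= nb Y v.
Proof.
move=> H; rewrite /nb [X in _ <= X](big_mkcond) [X in X <= _]big_mkcond /=.
apply: leq_sum => u _; case: ifP => // /(subsetP H) ->; done.
Qed.

Lemma sideS t v : side row t.+1 v = ~~ side row t v.
Proof. rewrite /side /=; by case: (odd t); case: (row v). Qed.

Lemma side_adj t u v : e u v -> side row t u -> side row t v -> False.
Proof.
move=> /ebip; rewrite /side; case: (odd t); case: (row u); case: (row v) => //.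
Qed.

Definition stableP c v : stable e s c -> v != s -> c v < deg e v.
Proof. by move=> /forallP /(_ v) /implyP H /H. Qed.

Definition dd c t := (canon_state e s row c t).1.
Definition SS c t := CanonTop e s row c t.
Definition TT c t := \bigcup_(i < t.+1) SS c i.

Lemma SS0 c : SS c 0 = [set s].
Proof. by []. Qed.

Lemma SSS c t : SS c t.+1 = unstable_in e s row t.+1 (dd c t).
Proof. by []. Qed.

Lemma mem_SSS c t v : (v \in SS c t.+1) = [&& v != s, side row t.+1 v & deg e v <= dd c t v].
Proof. by rewrite SSS inE andbA. Qed.

Lemma dd_s c t : dd c t s = 0.
Proof. by case: t => [|t]; rewrite /dd /= ffunE eqxx. Qed.

Lemma ddS c t v : v != s ->
  dd c t.+1 v = dd c t v - (if v \in SS c t.+1 then deg e v else 0) + nb (SS c t.+1) v.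
Proof.
move=> Hv; rewrite /dd /= ffunE (negbTE Hv) -/(dd c t) -SSS; congr (_ + _).
rewrite card_sum /nb [in RHS]big_mkcond /=; apply: eq_bigr => u _; by case: (u \in _).
Qed.

Lemma dd0 c v : v != s -> dd c 0 v = c v + e s v.
Proof.
move=> Hv; rewrite /dd /= ffunE (negbTE Hv) inE (negbTE Hv) subn0; congr (_ + _).
rewrite card_sum (bigD1 s) //= inE eqxx /= big1 ?addn0 // => u /negbTE Hu; by rewrite inE Hu.
Qed.

Lemma TT0 c : TT c 0 = [set s].
Proof. by rewrite /TT big_ord1. Qed.

Lemma TTS c t : TT c t.+1 = TT c t :|: SS c t.+1.
Proof. by rewrite /TT big_ord_recr. Qed.

Lemma mem_TT c t v : (v \in TT c t) = [exists i : 'I_t.+1, v \in SS c i].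
Proof.
apply/bigcupP/existsP => [[i _ H]|[i H]]; by exists i.
Qed.

Lemma SS_TT c t i v : i <= t -> v \in SS c i -> v \in TT c t.
Proof.
move=> Hi H; rewrite mem_TT; apply/existsP; by exists (Ordinal (n:=t.+1) Hi).
Qed.

Lemma s_TT c t : s \in TT c t.
Proof. apply: (@SS_TT c t 0) => //; by rewrite SS0 inE. Qed.

Lemma SS_side c t v : v \in SS c t -> side row t v.
Proof.
case: t => [|t]; first by rewrite SS0 inE => /eqP ->.
by rewrite mem_SSS => /and3P [].
Qed.

Lemma SS_ns c t v : v \in SS c t.+1 -> v != s.
Proof. by rewrite mem_SSS => /and3P []. Qed.

Lemma SS_unst c t v : v \in SS c t.+1 -> deg e v <= dd c t v.
Proof. by rewrite mem_SSS => /and3P []. Qed.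

Section Stab.
Variable c : config V.
Hypothesis Hc : stable e s c.

Lemma inv t v : v != s ->
  dd c t v + (if v \in TT c t then deg e v else 0) = c v + nb (TT c t) v.
Proof.
elim: t v => [|t IH] v Hv.
  by rewrite dd0 // TT0 inE (negbTE Hv) addn0 nb1.
have Hdis : forall w, w \in SS c t.+1 -> w \notin TT c t.
  move=> w Hw; apply/negP => HT.
  have := IH w (SS_ns Hw); rewrite HT.
  have := SS_unst Hw; have := stableP Hc (SS_ns Hw); have := nb_le (TT c t) w; lia.
have Hd : [disjoint TT c t & SS c t.+1].
  rewrite disjoint_sym; apply/pred0P => w /=; apply/negbTE/negP => /andP [H1 H2].
  by move: (Hdis w H1); rewrite H2.
rewrite ddS // TTS nbU // in_setU.
have := IH v Hv.
case HS: (v \in SS c t.+1).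
  have := SS_unst HS; move: (Hdis v HS) => /negbTE ->; rewrite ?orbT; lia.
rewrite orbF; case: (v \in TT c t); lia.
Qed.

Lemma TT_lt t v : v != s -> v \in TT c t -> dd c t v < deg e v.
Proof.
move=> Hv HT; have := inv t Hv; rewrite HT.
have := stableP Hc Hv; have := nb_le (TT c t) v; lia.
Qed.

Lemma SS_TTn t v : v \in SS c t.+1 -> v \notin TT c t.
Proof.
move=> H; apply/negP => HT; have := TT_lt (SS_ns H) HT; have := SS_unst H; lia.
Qed.

Lemma SS_uniq i j v : v \in SS c i -> v \in SS c j -> i = j.
Proof.
wlog: i j / i <= j => [W Hi Hj|].
  case: (leqP i j) => H; first exact: W.
  by apply/esym/W => //; apply: ltnW.
move=> Hij Hi Hj; move: Hij; rewrite leq_eqVlt => /orP [/eqP -> // | Hlt].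
move: Hj Hlt; case: j => // j Hj Hlt.
have := SS_TTn Hj; by rewrite (@SS_TT c j i v).
Qed.

Lemma side_stab t v : v != s -> side row t v -> dd c t v < deg e v.
Proof.
elim: t v => [|t IH] v Hv Hs.
  rewrite dd0 //; have := stableP Hc Hv.
  have -> : e s v = false.
    apply/negP => /ebip; move: Hs; rewrite /side /= => ->; by rewrite rows.
  by rewrite addn0.
case HS: (v \in SS c t.+1).
  apply: TT_lt => //; by rewrite TTS inE HS orbT.
rewrite ddS // HS subn0.
have -> : nb (SS c t.+1) v = 0.
  rewrite /nb big1 // => u Hu.
  have := SS_side Hu; move=> Hu'; case He: (e u v) => //.
  by case: (side_adj He Hu' Hs).
rewrite addn0; move: HS; rewrite mem_SSS Hv Hs /=; by rewrite leqNgt => /negbFE.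
Qed.

Definition fstab t := [forall v, (v != s) ==> (dd c t v < deg e v)].

Lemma fstabP t v : fstab t -> v != s -> dd c t v < deg e v.
Proof. by move=> /forallP /(_ v) /implyP. Qed.

Lemma fstab_S t : fstab t -> fstab t.+1 /\ SS c t.+1 = set0.
Proof.
move=> H.
have H0 : SS c t.+1 = set0.
  apply/setP => v; rewrite mem_SSS inE; apply/negP => /and3P [Hv _ Hd].
  have := fstabP H Hv; lia.
split => //; apply/forallP => v; apply/implyP => Hv.
rewrite ddS // H0 inE nb0 subn0 addn0; exact: fstabP.
Qed.

Lemma count t : fstab t \/ t.+1 <= #|TT c t|.
Proof.
elim: t => [|t IH]; first by right; rewrite TT0 cards1.
case Hf: (fstab t); first by left; case: (fstab_S Hf).
case: IH => [|IH]; first by rewrite Hf.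
right; move/negbT: Hf => /forallPn [v]; rewrite negb_imply -leqNgt => /andP [Hv Hd].
have Hsd : side row t.+1 v.
  rewrite sideS; apply/negP => Hs; have := side_stab Hv Hs; lia.
have HS : v \in SS c t.+1 by rewrite mem_SSS Hv Hsd Hd.
have : TT c t \proper TT c t.+1.
  apply/properP; split; first by rewrite TTS subsetUl.
  exists v; first by rewrite TTS inE HS orbT.
  exact: SS_TTn.
move/proper_card; lia.
Qed.

Lemma fstab_K : fstab #|V|.
Proof.
case: (count #|V|) => // H; have := max_card (TT c #|V|); lia.
Qed.

Definition nofsc (x : config V) := forall A : {set V}, s \notin A -> A != set0 ->
  exists2 v, v \in A & nb A v <= x v.

Hypothesis Hn : nofsc c.

Lemma all_TT v : v \in TT c #|V|.
Proof.
apply/negPn/negP => Hv.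
have Hs : s \notin ~: TT c #|V| by rewrite inE s_TT.
have Hne : ~: TT c #|V| != set0 by apply/set0Pn; exists v; rewrite inE.
case: (Hn Hs Hne) => u; rewrite inE => Hu Hle.
have Hus : u != s by apply: contraNneq Hu => ->; exact: s_TT.
have := inv #|V| Hus; rewrite (negbTE Hu) addn0.
have := fstabP fstab_K Hus; have := nb_split (TT c #|V|) u; lia.
Qed.

End Stab.

Lemma card_set1P (P : pred V) v : #|[set u in [set v] | P u]| = P v.
Proof.
rewrite card_sum (bigD1 v) //= !inE eqxx /= big1 ?addn0 // => u /negbTE Hu.
by rewrite !inE Hu.
Qed.

Lemma lb (d : config V) (Hd : nofsc d) (f : V -> nat)
  (Hf : forall u v, e u v -> f u != f v) :
  forall A : {set V}, s \notin A ->
  \sum_(v in A) \sum_(w in A) (e v w && (f v < f w) : nat) <= \sum_(v in A) d v.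
Proof.
suff: forall k (A : {set V}), #|A| <= k -> s \notin A ->
  \sum_(v in A) \sum_(w in A) (e v w && (f v < f w) : nat) <= \sum_(v in A) d v.
  by move=> H A; apply: (H #|A|).
elim=> [|k IH] A HA Hs.
  have -> : A = set0 by apply/eqP; rewrite -cards_eq0; lia.
  by rewrite !big_set0.
case: (eqVneq A set0) => [->|Hne]; first by rewrite !big_set0.
case: (Hd A Hs Hne) => v Hv Hle.
set A' := A :\ v.
have HA' : #|A'| <= k by move: HA; rewrite /A' (cardsD1 v A) Hv /=; lia.
have Hs' : s \notin A' by rewrite /A' !inE negb_and Hs orbT.
have Hsub : forall (F : V -> nat), \sum_(u in A | u != v) F u = \sum_(u in A') F u.
  by move=> F; apply: eq_bigl => u; rewrite /A' !inE andbC.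
have IHA := IH A' HA' Hs'.
rewrite (bigD1 v Hv) [X in _ <= X](bigD1 v Hv) /= Hsub.
have E1 : \sum_(u in A') \sum_(w in A) (e u w && (f u < f w) : nat) =
   \sum_(u in A') (e u v && (f u < f v) : nat) +
   \sum_(u in A') \sum_(w in A') (e u w && (f u < f w) : nat).
  rewrite -big_split /=; apply: eq_bigr => u Hu.
  by rewrite (bigD1 v Hv) /= Hsub.
have E2 : \sum_(w in A) (e v w && (f v < f w) : nat) = \sum_(w in A') (e v w && (f v < f w) : nat).
  by rewrite (bigD1 v Hv) /= eirr add0n Hsub.
have E3 : \sum_(w in A') (e v w && (f v < f w) : nat) + \sum_(u in A') (e u v && (f u < f v) : nat)
   <= nb A v.
  apply: leq_trans (nb_sub v (subD1set A v)).
  rewrite /nb -big_split /=; apply: leq_sum => u _.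
  rewrite (esymm v u); case He: (e u v) => //=.
  have := Hf _ _ He; case: ltngtP => //.
rewrite E1 E2 [X in _ <= d v + X](_ : _ = \sum_(i in A') d i); first by lia.
apply: eq_bigl => i; by rewrite /A' !inE andbC.
Qed.

Definition Phi (x : config V) (Y : {set V}) : config V :=
  [ffun v => if v == s then 0 else x v + nb Y v - (if v \in Y then deg e v else 0)].

Lemma reach_s (x : config V) : reachable e s x -> x s = 0.
Proof.
elim => [|c0 d0 _ IH st]; first by rewrite ffunE eqxx.
case: st IH => [c1 v Hv | c1 v Hv _] IH; rewrite ffunE ?eqxx //.
by rewrite IH eq_sym (negbTE Hv).
Qed.

Lemma Phi0 (x : config V) : x s = 0 -> Phi x set0 = x.
Proof.
move=> Hs; apply/ffunP => v; rewrite ffunE nb0 inE addn0 subn0.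
by case: eqP => // ->.
Qed.

Lemma topple_Phi (x : config V) (X : {set V}) v : v \notin X -> v != s ->
  (forall w, w \in X -> deg e w <= x w + nb X w) ->
  topple e s v (Phi x X) = Phi x (v |: X).
Proof.
move=> HvX Hvs HX; apply/ffunP => w; rewrite /topple /topple_set !ffunE.
case: (eqVneq w s) => [//|Hw].
rewrite card_set1P /nb big_setU1 //= -/(nb X w) in_set1 in_setU1.
case: (eqVneq w v) => [->|Hwv] /=.
  by rewrite (negbTE HvX) eirr; lia.
case HwX: (w \in X); last by lia.
have := HX w HwX; lia.
Qed.

Lemma fire (x : config V) (Y : {set V}) (rho : V -> nat) : reachable e s x -> s \notin Y ->
  (forall v, v \in Y -> deg e v <= x v + \sum_(u in Y | rho u < rho v) (e u v : nat)) ->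
  reachable e s (Phi x Y).
Proof.
move=> Hx Hs Hcond.
have Hsum : forall (X : {set V}) w, w \in Y ->
    (forall u, u \in Y -> rho u < rho w -> u \in X) -> deg e w <= x w + nb X w.
  move=> X w Hw Hcl; apply: leq_trans (Hcond w Hw) _; rewrite leq_add2l /nb.
  rewrite big_mkcond [X in _ <= X]big_mkcond /=; apply: leq_sum => u _.
  case: ifP => // /andP [HuY Hlt]; by rewrite (Hcl u HuY Hlt).
have main : forall k, k <= #|Y| -> exists X : {set V}, [/\ X \subset Y, #|X| = k,
    (forall u w, u \in X -> w \in Y -> rho w < rho u -> w \in X) & reachable e s (Phi x X)].
  elim=> [_|k IH Hk].
    exists set0; split => //; [exact: sub0set | by rewrite cards0 | by move=> u w; rewrite inE |].
    by rewrite Phi0 // reach_s.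
  case: (IH (ltnW Hk)) => X [HXY HX Hcl HR].
  have : Y :\: X != set0.
    apply/negP; rewrite setD_eq0 => /subset_leq_card; lia.
  case/set0Pn => v0 Hv0.
  case: (arg_minnP rho Hv0) => v Hv Hmin.
  have HvD : v \in Y :\: X := Hv.
  move: (HvD); rewrite inE => /andP [HvX HvY].
  have Hvs : v != s by apply: contraNneq Hs => <-.
  have Hcl' : forall u, u \in Y -> rho u < rho v -> u \in X.
    move=> u Hu Hlt; apply/negPn/negP => HuX.
    have HuD : u \in Y :\: X by rewrite inE HuX Hu.
    have := Hmin u HuD; lia.
  exists (v |: X); split.
  - by rewrite subUset sub1set HvY HXY.
  - by rewrite cardsU1 HvX HX.
  - move=> u w; rewrite !in_setU1 => /orP [/eqP -> | Hu] Hw Hlt; apply/orP; right.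
      exact: Hcl'.
    exact: Hcl Hu Hw Hlt.
  - rewrite -topple_Phi //.
      apply: reach_step HR _; apply: StepTopple => //.
      rewrite ffunE (negbTE Hvs) (negbTE HvX) subn0; exact: Hsum.
    move=> w Hw; apply: Hsum; first exact: (subsetP HXY).
    move=> u Hu Hlt; exact: Hcl Hw Hu Hlt.
case: (main #|Y| (leqnn _)) => X [HXY HX _ HR].
have -> : Y = X by apply/eqP; rewrite eq_sym eqEcard HXY HX leqnn.
done.
Qed.

Lemma reach_add (x0 y : config V) : reachable e s x0 -> (forall v, x0 v <= y v) -> y s = 0 -> reachable e s y.
Proof.
move=> Hx0 Hle0 Hys.
suff: forall k (x : config V), reachable e s x -> (forall v, x v <= y v) ->
  \sum_v (y v - x v) = k -> reachable e s y by move=> H; exact: H _ x0 Hx0 Hle0 erefl.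
elim=> [|k IH] x Hx Hle Hsum.
  have -> : y = x; last done.
  apply/ffunP => v; move/eqP: Hsum; rewrite sum_nat_eq0 => /forallP /(_ v) /=.
  have := Hle v; lia.
case: (pickP (fun v => x v < y v)) => [v Hv | H0]; last first.
  move: Hsum; rewrite big1 // => v _; have := H0 v; have := Hle v; lia.
have Hvs : v != s by apply: contraTneq Hv => ->; rewrite Hys reach_s.
apply: (IH (add_grain v x)).
- apply: reach_step Hx _; exact: StepAdd.
- move=> w; rewrite ffunE; case: eqP => [->|_]; have := Hle w; lia.
- move: Hsum; rewrite (bigD1 v) //= => Hsum; rewrite (bigD1 v) //= ffunE eqxx /=.
  rewrite (eq_bigr (fun w => y w - x w)); first by move: Hv => /= Hv; lia.
  by move=> w /negbTE Hw; rewrite ffunE Hw addn0.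
Qed.

Hypothesis Hcol : forall v, ~~ row v -> e s v.

Lemma es_row v : row v -> e s v = false.
Proof. move=> Hr; apply/negP => /ebip; by rewrite rows Hr. Qed.

Section Main.
Variable c : config V.
Hypothesis Hc : stable e s c.
Hypothesis Hn : nofsc c.

Definition tau v := find (fun t => v \in SS c t) (iota 0 #|V|.+1).

Lemma tauP v : v \in SS c (tau v) /\ tau v <= #|V|.
Proof.
have Hh : has (fun t => v \in SS c t) (iota 0 #|V|.+1).
  move: (all_TT Hc Hn v); rewrite mem_TT => /existsP [i Hi].
  apply/hasP; exists (nat_of_ord i) => //; rewrite mem_iota /= add0n; exact: ltn_ord.
have Hlt := Hh; rewrite has_find size_iota in Hlt.
have := nth_find 0 Hh; rewrite nth_iota // add0n => H; split => //.
Qed.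

Lemma tau_eq v t : (v \in SS c t) = (tau v == t).
Proof.
apply/idP/eqP => [H|<-]; last exact: (proj1 (tauP v)).
exact (SS_uniq Hc (proj1 (tauP v)) H).
Qed.

Lemma tau_TT v t : (v \in TT c t) = (tau v <= t).
Proof.
apply/idP/idP => [|H]; last exact: SS_TT H (proj1 (tauP v)).
rewrite mem_TT => /existsP [i]; rewrite tau_eq => /eqP ->; by rewrite -ltnS.
Qed.

Lemma tau_s : tau s = 0.
Proof. by apply/eqP; rewrite -tau_eq SS0 inE. Qed.

Lemma tau_pos v : v != s -> 0 < tau v.
Proof.
move=> Hv; rewrite lt0n; apply/negP => /eqP H.
by move: (proj1 (tauP v)); rewrite H SS0 inE (negbTE Hv).
Qed.

Lemma tau_adj u v : e u v -> tau u != tau v.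
Proof.
move=> He; apply/negP => /eqP H.
have Hu := SS_side (proj1 (tauP u)); have Hv := SS_side (proj1 (tauP v)).
rewrite H in Hu; exact: side_adj He Hu Hv.
Qed.

Definition later v := \sum_w (e v w && (tau v < tau w) : nat).
Definition earlier v := \sum_w (e w v && (tau w < tau v) : nat).

Lemma deg_el v : deg e v = earlier v + later v.
Proof.
rewrite deg_nb /nb /earlier /later -big_split; apply: eq_big => [w|w _]; first by rewrite inE.
rewrite /= (esymm v w); case He: (e w v) => //=.
have := tau_adj He; case: ltngtP => //.
Qed.

Lemma nb_earlier v t : tau v = t.+1 -> nb (TT c t) v = earlier v.
Proof.
move=> H; rewrite /nb big_mkcond /earlier; apply: eq_bigr => w _.
rewrite tau_TT H ltnS; by case: (tau w <= t); case: (e w v).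
Qed.

Lemma topple_cond v : v != s -> deg e v <= c v + earlier v.
Proof.
move=> Hv; have Hp := tau_pos Hv.
have [t Ht] : exists t, tau v = t.+1 by exists (tau v).-1; lia.
have HS : v \in SS c t.+1 by rewrite -Ht; exact: (proj1 (tauP v)).
have := SS_unst HS; have := inv Hc t Hv; rewrite (negbTE (SS_TTn Hc HS)) addn0.
rewrite nb_earlier //; lia.
Qed.

Lemma later_le v : v != s -> later v <= c v.
Proof. move=> Hv; have := topple_cond Hv; have := deg_el v; lia. Qed.

Definition mr : config V := [ffun v => if v == s then 0 else later v].

Lemma mr_stable : stable e s mr.
Proof.
apply/forallP => v; apply/implyP => Hv; rewrite ffunE (negbTE Hv).
have := deg_el v; have := topple_cond Hv; have := stableP Hc Hv; lia.
Qed.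

Lemma mr_le v : mr v <= c v.
Proof. rewrite ffunE; case: ifP => // /negbT Hv; exact: later_le. Qed.

Lemma mr_SS t : SS mr t = SS c t.
Proof.
suff : TT mr t = TT c t /\ SS mr t = SS c t by case.
elim: t => [|t [IHT IHS]]; first by rewrite !TT0 !SS0.
have ES : SS mr t.+1 = SS c t.+1.
  apply/setP => v; rewrite !mem_SSS.
  case Hv: (v != s) => //=; case Hs: (side row t.+1 v) => //=.
  case HT: (v \in TT c t).
    have H1 := TT_lt Hc Hv HT.
    have H2 : dd mr t v < deg e v by apply: (TT_lt mr_stable Hv); rewrite IHT.
    apply/idP/idP; lia.
  have E1 := inv Hc t Hv; have E2 := inv mr_stable t Hv.
  rewrite IHT HT addn0 in E2; rewrite HT addn0 in E1.
  rewrite E1 E2 ffunE (negbTE Hv).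
  apply/idP/idP => H.
    have := later_le Hv; lia.
  have HS : v \in SS c t.+1 by rewrite mem_SSS Hv Hs E1.
  have Ht : tau v = t.+1 by apply/eqP; rewrite -tau_eq.
  rewrite nb_earlier // (deg_el v); lia.
by rewrite !TTS IHT ES.
Qed.

Lemma total_mr (d : config V) : nofsc d -> Defs.total s mr <= Defs.total s d.
Proof.
move=> Hd.
have Hs : s \notin [set v | v != s] by rewrite inE eqxx.
have := lb Hd (f := tau) tau_adj Hs.
rewrite /Defs.total.
have -> : \sum_(v in [set v | v != s]) d v = \sum_(v | v != s) d v.
  by apply: eq_bigl => v; rewrite inE.
apply: leq_trans; rewrite [X in X <= _](eq_bigl (fun v => v \in [set v | v != s])); last first.
  by move=> v; rewrite inE.
apply: leq_sum => v; rewrite inE => Hv; rewrite ffunE (negbTE Hv) /later.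
rewrite [X in _ <= X]big_mkcond; apply: leq_sum => w _; rewrite inE.
case: (eqVneq w s) => [->|//]; by rewrite tau_s ltn0 andbF.
Qed.

Definition MA k : config V := [ffun v => if v == s then 0 else mr v + (if row v then 0 else k)].

Lemma nb_ns v : v != s -> deg e v = nb [set w | w != s] v + e s v.
Proof.
move=> Hv; rewrite (nb_split [set w | w != s] v); congr (_ + _).
have -> : ~: [set w | w != s] = [set s] by apply/setP => w; rewrite !inE negbK.
by rewrite nb1.
Qed.

Lemma burn k : reachable e s (MA k.+1) -> reachable e s (MA k).
Proof.
move=> H.
have Hs : s \notin [set w | w != s] by rewrite inE eqxx.
have := fire H Hs (rho := tau).
have -> : Phi (MA k.+1) [set w | w != s] = MA k.
  apply/ffunP => v; rewrite !ffunE; case: (eqVneq v s) => // Hv.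
  rewrite inE Hv /=; have := nb_ns Hv.
  case Hr: (row v); first by rewrite es_row //; lia.
  by rewrite Hcol ?Hr //; lia.
apply => v; rewrite inE => Hv; rewrite ffunE (negbTE Hv) (deg_el v).
have : earlier v <= e s v + \sum_(u in [set w | w != s] | tau u < tau v) (e u v : nat).
  rewrite /earlier (bigD1 s) // big_mkcond [X in _ <= _ + X]big_mkcond.
  apply: leq_add; first by case: (e s v); rewrite ?leq_b1.
  apply: leq_sum => u _; rewrite !inE; case: (u != s) => //=; by case: (e u v); case: (tau u < tau v).
rewrite ffunE (negbTE Hv).
case Hr: (row v); first by rewrite es_row //; lia.
rewrite Hcol ?Hr //; lia.
Qed.

Lemma mr_reach : reachable e s mr.
Proof.
pose a := 2 * #|V|.
pose Y := [set w | row w && (w != s)].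
pose X0 : config V := [ffun v => if v == s then 0 else
   if row v then mr v + deg e v else mr v + a - (deg e v).-1].
have Hdeg : forall v, deg e v <= #|V| by move=> v; exact: max_card.
have HX0 : reachable e s X0.
  apply: (reach_add (reach_max _ _)); last by rewrite ffunE eqxx.
  move=> v; rewrite !ffunE; case: ifP => // _; case: ifP => _; have := Hdeg v; lia.
have Hs : s \notin Y by rewrite inE eqxx andbF.
have := fire HX0 Hs (rho := fun _ => 0).
have -> : Phi X0 Y = MA a.
  apply/ffunP => v; rewrite !ffunE; case: (eqVneq v s) => // Hv.
  rewrite inE Hv andbT.
  case Hr: (row v).
    have -> : nb Y v = 0.
      rewrite /nb big1 // => u; rewrite inE => /andP [Hu _].
      by apply/eqP; rewrite eqb0; apply/negP => /ebip; rewrite Hu Hr.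
    lia.
  have HnY : nb (~: Y) v = 1.
    rewrite /nb (bigD1 s) /=; last by rewrite !inE eqxx andbF.
    rewrite Hcol ?Hr // big1 // => u; rewrite !inE negb_and negbK => /andP [Hu Hus].
    rewrite (negbTE Hus) orbF in Hu.
    by apply/eqP; rewrite eqb0; apply/negP => /ebip; rewrite Hr (negbTE Hu).
  have := nb_split Y v; have := Hdeg v; lia.
have Hiter : forall k, reachable e s (MA k) -> reachable e s (MA 0).
  by elim=> [//|k IH] /burn.
have -> : mr = MA 0.
  apply/ffunP => v; rewrite !ffunE; case: ifP => // _; by case: ifP; rewrite addn0.
move=> H; apply: (Hiter a); apply: H => v; rewrite inE => /andP [Hr Hv].
rewrite ffunE (negbTE Hv) Hr; lia.
Qed.

End Main.

Hypothesis Htop : exists2 z, ~~ row z & forall r, row r -> e r z.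

Lemma nb_lt (A : {set V}) v w : w \notin A -> e w v -> nb A v < deg e v.
Proof.
move=> Hw He; rewrite (nb_split A v) -addn1 leq_add2l.
apply: leq_trans (nb_sub v (_ : [set w] \subset ~: A)); first by rewrite nb1 He.
by rewrite sub1set inE.
Qed.

Lemma nofsc_reach (x : config V) : reachable e s x -> nofsc x.
Proof.
elim => [|c0 d0 _ IH st].
  move=> A Hs Hne; case: Htop => z Hz Hzr.
  case HzA: (z \in A).
    exists z => //; rewrite ffunE.
    have Hzs : z != s by apply: contraNneq Hz => ->.
    rewrite (negbTE Hzs); have := nb_lt Hs (Hcol Hz); lia.
  case/set0Pn: Hne => v Hv; exists v => //.
  have Hvs : v != s by apply: contraNneq Hs => <-.
  rewrite ffunE (negbTE Hvs).
  case Hr: (row v).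
    have := @nb_lt A v z (negbT HzA); rewrite esymm Hzr // => /(_ isT); lia.
  have := nb_lt Hs (Hcol (negbT Hr)); lia.
case: st IH => [c1 w Hw | c1 w Hw Hunst] IH A Hs Hne.
  case: (IH A Hs Hne) => v Hv Hle; exists v => //; rewrite ffunE; lia.
case HwA: (w \in A); last first.
  case: (IH A Hs Hne) => v Hv Hle; exists v => //.
  have Hvs : v != s by apply: contraNneq Hs => <-.
  have Hvw : v != w by apply: contraNneq (negbT HwA) => <-.
  rewrite /topple /topple_set ffunE (negbTE Hvs) in_set1 (negbTE Hvw) card_set1P; lia.
case: (eqVneq (A :\ w) set0) => [H0|Hne'].
  exists w => //.
  have -> : A = [set w].
    apply/setP => u; rewrite in_set1; apply/idP/eqP => [Hu|->//].
    apply/eqP; apply/negPn/negP => Huw.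
    by move: H0 => /setP /(_ u); rewrite !inE Huw Hu.
  by rewrite nb1 eirr.
have Hs' : s \notin A :\ w by rewrite !inE negb_and Hs orbT.
case: (IH _ Hs' Hne') => v; rewrite !inE => /andP [Hvw Hv] Hle; exists v => //.
have Hvs : v != s by apply: contraNneq Hs => <-.
have EA : A = w |: (A :\ w) by rewrite setD1K.
rewrite /topple /topple_set ffunE (negbTE Hvs) in_set1 (negbTE Hvw) card_set1P.
have Enb : nb A v = e w v + nb (A :\ w) v.
  by rewrite {1}EA /nb big_setU1 //= !inE eqxx.
rewrite Enb; lia.
Qed.

End Gen.

Lemma sum_eq_le (V : finType) (P : pred V) (f g : V -> nat) :
  (forall v, f v <= g v) -> \sum_(v | P v) g v <= \sum_(v | P v) f v ->
  forall v, P v -> f v = g v.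
Proof.
move=> Hle Hs v Pv.
have E : \sum_(v | P v) g v = \sum_(v | P v) f v + \sum_(v | P v) (g v - f v).
  rewrite -big_split; apply: eq_bigr => u _ /=; have := Hle u; lia.
have : \sum_(v | P v) (g v - f v) == 0 by rewrite E in Hs; apply/eqP; lia.
rewrite sum_nat_eq0 => /forallP /(_ v); rewrite Pv /=; have := Hle v; lia.
Qed.

Section Ferrers.
Variables (n : nat) (F : seq bool).
Hypothesis HF : ferrers n F.

Let e := @fedge n F.
Let row := @isrow n F.

Lemma fesym x y : e x y = e y x.
Proof. by rewrite /e /fedge orbC. Qed.

Lemma feirr x : e x x = false.
Proof. by rewrite /e /fedge /fcell ltnn !andbF. Qed.

Lemma febip u w : e u w -> row u != row w.
Proof.
rewrite /e /row /fedge /fcell => /orP [] /and3P [H1 H2 _]; by rewrite H1 (negbTE H2).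
Qed.

Lemma frows : row ord0.
Proof. by case: HF. Qed.

Lemma fcol v : ~~ row v -> e ord0 v.
Proof.
move=> Hv; have Hv0 : v != ord0 by apply: contraNneq Hv => ->; exact: frows.
rewrite /e /fedge /fcell -/row; apply/orP; left; rewrite frows Hv /= lt0n.
by move: Hv0; apply: contra => /eqP H; apply/eqP/val_inj.
Qed.

Lemma ftop : exists2 z, ~~ row z & forall r, row r -> e r z.
Proof.
have Hmax : row (@ord_max n) = false.
  case: HF => Hs _ Hn; rewrite /row /isrow /= (set_nth_default true); [exact: Hn | by rewrite Hs].
exists (@ord_max n); first by rewrite Hmax.
move=> r Hr; rewrite /e /fedge /fcell -/row; apply/orP; left; rewrite Hr Hmax /=.
have : r != ord_max by apply: contraTneq Hr => ->; rewrite Hmax.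
have := ltn_ord r; move=> H1 H2; rewrite ltn_neqAle -ltnS H1 andbT.
by move: H2; apply: contra => /eqP H; apply/eqP/val_inj.
Qed.

Variable c : config 'I_n.+1.
Hypothesis Hc : stable e ord0 c.
Hypothesis Hn : nofsc e ord0 c.

Let tt := tau e ord0 row c.

Lemma row_tau v : row v = ~~ odd (tt v).
Proof.
have := SS_side frows (proj1 (tauP fesym febip frows Hc Hn v)).
rewrite /side -/tt; by case: (odd (tt v)); case: (row v).
Qed.

Lemma tt_le v : tt v <= n.+1.
Proof. by have := proj2 (tauP fesym febip frows Hc Hn v); rewrite card_ord. Qed.

Lemma tt_eq v t : (v \in SS e ord0 row c t) = (tt v == t).
Proof. exact (tau_eq fesym febip frows Hc Hn v t). Qed.

Lemma memU v k : (v \in Ulev e ord0 row c k) = (tt v == k.*2).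
Proof. exact (tt_eq v k.*2). Qed.

Lemma memV v k : (v \in Vlev e ord0 row c k) = (0 < k) && (tt v == k.*2.-1).
Proof. case: k => [|k]; first by rewrite /Vlev inE. exact (tt_eq v (k.+1.*2.-1)). Qed.

Lemma minrec_mr : minrec F c = mr e ord0 row c.
Proof.
apply/ffunP => j; rewrite /minrec !ffunE.
case: (eqVneq j ord0) => [//|Hj].
rewrite /later -/row -/e -/tt.
case Hr: (row j).
  case: pickP => [i Hi | Hnone]; last first.
    have := Hnone (inord (tt j)./2); rewrite memU inordK; last first.
      have := tt_le j; lia.
    have := row_tau j; rewrite Hr; lia.
  move: Hi; rewrite memU => /eqP Hi.
  rewrite card_sum; apply: eq_bigr => l _; congr nat_of_bool.
  apply/idP/idP.
    move=> /andP [/existsP [k /andP [Hik]]]; rewrite memV => /andP [Hk /eqP Hl] Hjl.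
    have Hrl : row l = false by rewrite row_tau Hl; lia.
    rewrite Hi Hl; apply/andP; split; last by lia.
    by rewrite /e /fedge /fcell -/row Hr Hrl Hjl.
  move=> /andP [He Hlt].
  have [Hrl Hjl] : row l = false /\ j < l.
    move: He; rewrite /e /fedge /fcell -/row Hr /= andbF orbF => /andP [H1 H2].
    by rewrite (negbTE H1).
  rewrite Hjl andbT; apply/existsP; exists (inord (tt l).+1./2).
  have Hodd : odd (tt l) by move: Hrl; rewrite row_tau => /negbFE.
  have Hb : (tt l).+1./2 < n.+2 by have := tt_le l; lia.
  rewrite memV inordK //; apply/and3P; split; [lia | lia | apply/eqP; lia].
case: pickP => [i Hi | Hnone]; last first.
  have := Hnone (inord (tt j).+1./2); rewrite memV inordK; last first.
    have := tt_le j; lia.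
  have := row_tau j; rewrite Hr; lia.
move: Hi; rewrite memV => /andP [Hi0 /eqP Hi].
rewrite card_sum; apply: eq_bigr => l _; congr nat_of_bool.
apply/idP/idP.
  move=> /andP [/existsP [k /andP [Hik]]]; rewrite memU => /eqP Hl Hlj.
  have Hrl : row l = true by rewrite row_tau Hl; lia.
  rewrite Hi Hl; apply/andP; split; last by lia.
  by rewrite /e /fedge /fcell -/row Hr Hrl Hlj orbT.
move=> /andP [He Hlt].
have [Hrl Hlj] : row l = true /\ l < j.
  move: He; rewrite /e /fedge /fcell -/row Hr /= => /andP [H1 H2].
  by rewrite H1.
rewrite Hlj andbT; apply/existsP; exists (inord (tt l)./2).
have Hev : ~~ odd (tt l) by rewrite -row_tau.
have Hb : (tt l)./2 < n.+2 by have := tt_le l; lia.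
rewrite memU inordK //; apply/andP; split; [lia | apply/eqP; lia].
Qed.

End Ferrers.

Theorem lemma3p5 (n : nat) (F : seq bool) (c' : config 'I_n.+1) :
  ferrers n F ->
  recurrent (fedge F) ord0 c' ->
  recmin (fedge F) ord0 (minrec F c') /\
  CanonTop (fedge F) ord0 (isrow F) (minrec F c') =1
    CanonTop (fedge F) ord0 (isrow F) c' /\
  (recmin (fedge F) ord0 c' -> minrec F c' = c').
Proof.
move=> HF [Hst Hre].
have Hnr : forall x : config 'I_n.+1, reachable (fedge F) ord0 x -> nofsc (fedge F) ord0 x.
  move=> x Hx A HsA HA; exact: (nofsc_reach (@fesym n F) (@feirr n F) (frows HF) (fcol HF) (ftop HF) Hx HsA HA).
have Hn := Hnr c' Hre.
rewrite (minrec_mr HF Hst Hn).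
have Hmrec : recurrent (fedge F) ord0 (mr (fedge F) ord0 (isrow F) c').
  split; first exact: (mr_stable (@fesym n F) (@febip n F) (frows HF) Hst Hn).
  exact: (mr_reach (@fesym n F) (@feirr n F) (@febip n F) (frows HF) (fcol HF) Hst Hn).
split; [split => // d [_ Hd] | split].
- exact: (total_mr (@fesym n F) (@feirr n F) (@febip n F) (frows HF) Hst Hn (Hnr d Hd)).
- move=> t; exact: (mr_SS (@fesym n F) (@febip n F) (frows HF) Hst Hn t).
- move=> [_ Hmin]; have Ht := Hmin _ Hmrec.
  apply/ffunP => v; case: (eqVneq v ord0) => [->|Hv].
    by rewrite (reach_s Hre) ffunE eqxx.
  apply: (sum_eq_le (P := fun v => v != ord0)) => //.
  move=> u; exact: (mr_le (@fesym n F) (@febip n F) (frows HF) Hst Hn u).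
Qed.
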